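(* Let $\lambda>0$ and $\alpha\in(0,1)$. Let $J$ and $N$ be the regular and singular solutions of $\varphi''+\frac{2}{r}\varphi'+\lambda\varphi=0$ on $(0,\infty)$, normalized so that $J(r)=r^{-1}\cos(\sqrt\lambda r-\zeta)+O(r^{-2})$ and $N(r)=r^{-1}\sin(\sqrt\lambda r-\zeta)+O(r^{-2})$ as $r\to+\infty$, where $\zeta\in\mathbb{R}$ is a constant depending on $\lambda$. Let $\rho$ be a smooth cutoff with $\rho(r)=1$ for $r>2$ and $\rho(r)=0$ for $r<1$. Let $$\eta(r)=\rho(r)r^{-2}\big[k_1\sin^2(\sqrt\lambda r-\zeta)+k_2\cos^2(\sqrt\lambda r-\zeta)+k_3\sin(\sqrt\lambda r-\zeta)\cos(\sqrt\lambda r-\zeta)\big]+\bar\eta(r),$$ where $k_1,k_2,k_3\in\mathbb{R}$ and $\|\bar\eta(r)(1+r)^3\|_{C^{0,\alpha}}+\sum_i|k_i|<C$. Then the equation $$h''+\frac{2}{r}h'+\lambda h=\eta$$ has a solution $h\in C^{0,\alpha}[0,+\infty)$ of the form $$h(r)=c_1r^{-1}\sin(\sqrt\lambda r-\zeta)+\bar h(r),\quad r>1,$$ where $|c_1|\le C'$ and $|\bar h(r)|\le C'(1+r)^{-2}$, with $C'$ depending only on $C$ and $\lambda$. *)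

(* Defs.v *)
From Stdlib Require Import Reals Lra.
From Coquelicot Require Import Coquelicot.
Open Scope R_scope.

Definition solves_radial (lam : R) (f phi : R -> R) : Prop :=
  exists phi1 phi2 : R -> R,
    forall r, 0 < r ->
      is_derive phi r (phi1 r) /\ is_derive phi1 r (phi2 r) /\
      phi2 r + (2 / r) * phi1 r + lam * phi r = f r.

Definition bigO_inv_sq (f g : R -> R) : Prop :=
  exists K R0, forall r, R0 <= r -> Rabs (f r - g r) <= K / (r * r).

Definition bounded_near0 (f : R -> R) : Prop :=
  exists M, forall r, 0 < r <= 1 -> Rabs (f r) <= M.

Definition holder_semi_le (alpha : R) (f : R -> R) (B : R) : Prop :=
  forall x y, 0 <= x -> 0 <= y -> x <> y ->
    Rabs (f x - f y) <= B * Rpower (Rabs (x - y)) alpha.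

Definition sup_le (f : R -> R) (A : R) : Prop :=
  forall x, 0 <= x -> Rabs (f x) <= A.

Definition C0alpha (alpha : R) (f : R -> R) : Prop :=
  exists A B, sup_le f A /\ holder_semi_le alpha f B.

Definition smooth (f : R -> R) : Prop := forall n x, ex_derive_n f n x.

Definition eta_fun (lam zeta k1 k2 k3 : R) (rho etabar : R -> R) (r : R) : R :=
  rho r * / (r * r) *
    (k1 * (sin (sqrt lam * r - zeta))^2 + k2 * (cos (sqrt lam * r - zeta))^2
     + k3 * sin (sqrt lam * r - zeta) * cos (sqrt lam * r - zeta))
  + etabar r.

(* Main.v *)
Require Import Defs.
From Stdlib Require Import Reals Lra Lia ZArith.
From Coquelicot Require Import Coquelicot.
Open Scope R_scope.

Lemma D_mult (f g : R -> R) (x df dg : R) : is_derive f x df -> is_derive g x dg ->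
  is_derive (fun t => f t * g t) x (df * g x + f x * dg).
Proof. intros H1 H2. apply (is_derive_mult f g x df dg H1 H2). intros; apply Rmult_comm. Qed.
Lemma D_plus (f g : R -> R) (x df dg : R) : is_derive f x df -> is_derive g x dg ->
  is_derive (fun t => f t + g t) x (df + dg).
Proof. intros H1 H2. apply (is_derive_plus f g x df dg H1 H2). Qed.
Lemma D_minus (f g : R -> R) (x df dg : R) : is_derive f x df -> is_derive g x dg ->
  is_derive (fun t => f t - g t) x (df - dg).
Proof. intros H1 H2. apply (is_derive_minus f g x df dg H1 H2). Qed.
Lemma D_eq (f : R -> R) (x l l' : R) : is_derive f x l -> l = l' -> is_derive f x l'.
Proof. intros H ->; exact H. Qed.
Lemma D_id (x : R) : is_derive (fun t => t) x 1.
Proof. apply is_derive_Reals. apply derivable_pt_lim_id. Qed.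

Lemma cont_pt_of_derive (f : R -> R) (x l : R) : is_derive f x l -> continuity_pt f x.
Proof. intros H. apply continuity_pt_filterlim. apply (ex_derive_continuous (V:=R_NormedModule)). exists l; exact H. Qed.

Lemma const_of_zero_derive (f : R -> R) (a b : R) :
  0 < a -> 0 < b -> (forall x, 0 < x -> is_derive f x 0) -> f b = f a.
Proof.
  intros Ha Hb H.
  destruct (MVT_gen f a b (fun _ => 0)) as [c [_ Hc]].
  - intros x Hx. apply H. assert (0 < Rmin a b) by (apply Rmin_glb_lt; auto). lra.
  - intros x Hx. apply cont_pt_of_derive with 0. apply H.
    assert (0 < Rmin a b) by (apply Rmin_glb_lt; auto). lra.
  - lra.
Qed.

Lemma harmonic_unique (s : R) (w w1 w2 : R -> R) : 0 < s ->
  (forall r, 0 < r -> is_derive w r (w1 r) /\ is_derive w1 r (w2 r) /\ w2 r = - (s*s) * w r) ->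
  exists p q, forall r, 0 < r -> w r = p * sin (s*r) + q * cos (s*r).
Proof.
  intros Hs H.
  set (p := w 1 * sin s + w1 1 * cos s / s).
  set (q := w 1 * cos s - w1 1 * sin s / s).
  exists p, q.
  set (z := fun r => w r - (p * sin (s*r) + q * cos (s*r))).
  set (z1 := fun r => w1 r - (p * s * cos (s*r) - q * s * sin (s*r))).
  set (E := fun r => z1 r * z1 r + (s*s) * (z r * z r)).
  assert (DT : forall r, is_derive (fun r => p * sin (s*r) + q * cos (s*r)) r (p * s * cos (s*r) - q * s * sin (s*r))).
  { intros r. auto_derive; auto; ring. }
  assert (DT1 : forall r, is_derive (fun r => p * s * cos (s*r) - q * s * sin (s*r)) r (- (s*s) * (p * sin (s*r) + q * cos (s*r)))).
  { intros r. auto_derive; auto; ring. }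
  assert (HE : forall r, 0 < r -> is_derive E r 0).
  { intros r Hr. destruct (H r Hr) as [H1 [H2 H3]].
    assert (Dz : is_derive z r (z1 r)) by (apply D_minus; auto).
    assert (Dz1 : is_derive z1 r (w2 r - (- (s*s) * (p * sin (s*r) + q * cos (s*r))))) by (apply D_minus; auto).
    unfold E. eapply D_eq.
    apply D_plus. apply D_mult; eauto. apply is_derive_scal. apply D_mult; eauto.
    rewrite H3. unfold z, z1. ring. }
  assert (E1 : E 1 = 0).
  { assert (SC := sin2_cos2 s). unfold Rsqr in SC.
    assert (Z0 : z 1 = 0).
    { unfold z, p, q. rewrite Rmult_1_r. rewrite <- (Rmult_1_r (w 1)) at 1. rewrite <- SC. field; lra. }
    assert (Z1 : z1 1 = 0).
    { unfold z1, p, q. rewrite Rmult_1_r. rewrite <- (Rmult_1_r (w1 1)) at 1. rewrite <- SC. field; lra. }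
    unfold E. rewrite Z0, Z1. ring. }
  intros r Hr. assert (Er : E r = 0) by (rewrite (const_of_zero_derive E 1 r); auto; lra).
  unfold E in Er.
  assert (A1 : 0 <= z1 r * z1 r) by nra. assert (A2 : 0 <= z r * z r) by nra. assert (A3 : 0 < s * s) by nra.
  assert (A5 : 0 <= (s*s) * (z r * z r)) by (apply Rmult_le_pos; lra).
  assert (A4 : (s*s) * (z r * z r) = 0) by lra.
  apply Rmult_integral in A4. destruct A4 as [A4|A4]; [lra|]. apply Rmult_integral in A4. assert (H0 : z r = 0) by (destruct A4; auto). unfold z in H0. lra.
Qed.

Lemma nat_unbounded (x : R) : exists n : nat, x < INR n.
Proof.
  destruct (archimed (Rabs x)) as [H1 H2].
  assert (Hp : (0 < up (Rabs x))%Z).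
  { apply lt_IZR. assert (0 <= Rabs x) by apply Rabs_pos. simpl. lra. }
  exists (Z.to_nat (up (Rabs x))). rewrite INR_IZR_INZ, Z2Nat.id by lia.
  assert (x <= Rabs x) by apply RRle_abs. lra.
Qed.

Lemma periodic_zero (s K R0 : R) (f : R -> R) : 0 < s ->
  (forall x (n : nat), f (x + 2 * INR n * PI / s) = f x) ->
  (forall r, R0 <= r -> 1 <= r -> Rabs (f r) <= K / r) ->
  forall x, f x = 0.
Proof.
  intros Hs Hper Hb x.
  destruct (Req_dec (f x) 0) as [E|E]; auto. exfalso.
  set (e := Rabs (f x)). assert (He : 0 < e) by (apply Rabs_pos_lt; auto).
  destruct (nat_unbounded ((Rabs x + Rabs R0 + 1 + (Rabs K + 1)/e) * s / (2*PI))) as [n Hn].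
  assert (HPI := PI_RGT_0).
  set (y := x + 2 * INR n * PI / s).
  assert (Hy : y > Rabs x + Rabs R0 + 1 + (Rabs K + 1)/e + x).
  { unfold y. apply Rmult_lt_compat_r with (r := 2*PI/s) in Hn; [|apply Rdiv_lt_0_compat; lra].
    replace ((Rabs x + Rabs R0 + 1 + (Rabs K + 1) / e) * s / (2 * PI) * (2 * PI / s)) with (Rabs x + Rabs R0 + 1 + (Rabs K + 1) / e) in Hn by (field; lra).
    replace (INR n * (2 * PI / s)) with (2 * INR n * PI / s) in Hn by (field; lra). lra. }
  assert (Hx := Rle_abs (-x)). rewrite Rabs_Ropp in Hx.
  assert (HR := RRle_abs R0). assert (HKe : 0 <= (Rabs K + 1)/e) by (apply Rdiv_le_0_compat; [assert (0<=Rabs K) by apply Rabs_pos|]; lra).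
  assert (HR0 := Rabs_pos R0). assert (Hy1 : 1 <= y) by lra. assert (HyR : R0 <= y) by lra.
  assert (Hfy := Hb y HyR Hy1). unfold y in Hfy. rewrite Hper in Hfy. fold y in Hfy. fold e in Hfy.
  assert (Hy2 : (Rabs K + 1)/e < y) by lra.
  assert (Hy3 : Rabs K + 1 < y * e).
  { apply Rmult_lt_compat_r with (r := e) in Hy2; auto. replace ((Rabs K + 1) / e * e) with (Rabs K + 1) in Hy2 by (field; lra). lra. }
  assert (K / y < e).
  { apply Rmult_lt_reg_r with y; [lra|]. replace (K / y * y) with K by (field; lra). assert (K <= Rabs K) by apply RRle_abs. lra. }
  lra.
Qed.

Lemma J_trig (lam zeta : R) (J : R -> R) : 0 < lam ->
  solves_radial lam (fun _ => 0) J -> bounded_near0 J ->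
  bigO_inv_sq J (fun r => / r * cos (sqrt lam * r - zeta)) ->
  exists p, p * p = 1 /\ forall x, cos (sqrt lam * x - zeta) = p * sin (sqrt lam * x)
     /\ sin (sqrt lam * x - zeta) = - p * cos (sqrt lam * x).
Proof.
  intros Hl [J1 [J2 HJ]] [M HM] [K [R0 HK]].
  set (s := sqrt lam). assert (Hs : 0 < s) by (apply sqrt_lt_R0; auto).
  assert (Hss : s * s = lam) by (apply sqrt_sqrt; lra).
  destruct (harmonic_unique s (fun r => r * J r) (fun r => J r + r * J1 r) (fun r => 2 * J1 r + r * J2 r) Hs) as [p [q Hpq]].
  { intros r Hr. destruct (HJ r Hr) as [D1 [D2 E]]. split; [|split].
    - eapply D_eq. apply D_mult. apply D_id. exact D1. simpl; ring.
    - eapply D_eq. apply D_plus. exact D1. apply D_mult. apply D_id. exact D2. simpl; ring.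
    - rewrite Hss. replace (2 * J1 r + r * J2 r) with (r * (J2 r + 2 / r * J1 r)) by (field; lra).
      replace (J2 r + 2 / r * J1 r) with (- (lam * J r)) by lra. ring. }
  assert (Hq : q = 0).
  { destruct (Req_dec q 0) as [Q|Q]; auto. exfalso.
    assert (Hc : continuity_pt (fun r => p * sin (s*r) + q * cos (s*r)) 0).
    { apply cont_pt_of_derive with (p * s * cos (s*0) - q * s * sin (s*0)). auto_derive; auto; ring. }
    unfold continuity_pt, continue_in, limit1_in, limit_in in Hc. simpl in Hc.
    assert (Hqp : 0 < Rabs q) by (apply Rabs_pos_lt; auto).
    destruct (Hc (Rabs q / 2)) as [d [Hd Hd2]]; [lra|].
    assert (HM0 : 0 <= M). { assert (H1 := HM 1 ltac:(lra)). assert (0 <= Rabs (J 1)) by apply Rabs_pos. lra. }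
    set (r := Rmin 1 (Rmin (d/2) (Rabs q / (4 * (M + 1))))).
    assert (Hr0 : 0 < r). { unfold r. repeat apply Rmin_glb_lt; try lra. apply Rdiv_lt_0_compat; lra. }
    assert (Hr1 : r <= 1) by apply Rmin_l.
    assert (Hrd : r < d). { assert (r <= Rmin (d/2) (Rabs q / (4 * (M + 1)))) by apply Rmin_r. assert (Rmin (d/2) (Rabs q / (4 * (M + 1))) <= d/2) by apply Rmin_l. lra. }
    assert (Hrq : r <= Rabs q / (4 * (M + 1))). { assert (r <= Rmin (d/2) (Rabs q / (4 * (M + 1)))) by apply Rmin_r. assert (Rmin (d/2) (Rabs q / (4 * (M + 1))) <= Rabs q / (4 * (M + 1))) by apply Rmin_r. lra. }
    assert (H1 := Hd2 r). unfold R_dist in H1.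
    rewrite Rmult_0_r, sin_0, cos_0, Rminus_0_r in H1.
    assert (H2 : Rabs (p * sin (s * r) + q * cos (s * r) - (p * 0 + q * 1)) < Rabs q / 2).
    { apply H1. split; [split; [exact I| lra]|]. rewrite Rabs_right; lra. }
    rewrite <- Hpq in H2 by lra.
    assert (H3 : Rabs (r * J r) <= r * M). { rewrite Rabs_mult, Rabs_right by lra. apply Rmult_le_compat_l; [lra|]. apply HM; lra. }
    assert (H4 : r * M <= Rabs q / 4).
    { apply Rle_trans with (Rabs q / (4 * (M + 1)) * (M + 1)). apply Rmult_le_compat; lra.
      right. field. lra. }
    assert (H5 : Rabs q <= Rabs (r * J r) + Rabs (r * J r - (p * 0 + q * 1))).
    { replace q with ((r * J r) - (r * J r - (p * 0 + q * 1))) at 1 by ring. apply Rabs_triang_inv2 || (unfold Rminus; eapply Rle_trans; [apply Rabs_triang|]; rewrite Rabs_Ropp; lra). }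
    lra. }
  subst q.
  exists p.
  set (f := fun x => p * sin (s * x) - cos (s * x - zeta)).
  assert (Hf : forall x, f x = 0).
  { apply (periodic_zero s (Rabs K) (Rmax R0 1) f Hs).
    - intros x n. unfold f. replace (s * (x + 2 * INR n * PI / s)) with (s * x + 2 * INR n * PI) by (field; lra).
      rewrite sin_period. replace (s * x + 2 * INR n * PI - zeta) with ((s * x - zeta) + 2 * INR n * PI) by ring.
      rewrite cos_period. reflexivity.
    - intros r Hr _. assert (Hr1 : 1 <= r) by (eapply Rle_trans; [apply Rmax_r|exact Hr]).
      assert (HrR : R0 <= r) by (eapply Rle_trans; [apply Rmax_l|exact Hr]).
      assert (H1 := HK r HrR). assert (H2 := Hpq r ltac:(lra)).
      assert (EJ : J r = p * sin (s * r) / r) by (rewrite Rmult_0_l, Rplus_0_r in H2; apply Rmult_eq_reg_l with r; [rewrite H2; field|]; lra).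
      rewrite EJ in H1. fold s in H1.
      replace (p * sin (s * r) / r - / r * cos (s * r - zeta)) with (f r / r) in H1 by (unfold f; field; lra).
      unfold Rdiv in H1. rewrite Rabs_mult, (Rabs_right (/ r)) in H1 by (apply Rle_ge, Rlt_le, Rinv_0_lt_compat; lra).
      apply Rmult_le_reg_r with (/ r); [apply Rinv_0_lt_compat; lra|].
      apply Rle_trans with (K * / (r * r)); auto. rewrite Rinv_mult.
      assert (K <= Rabs K) by apply RRle_abs. assert (0 < / r) by (apply Rinv_0_lt_compat; lra).
      unfold Rdiv. rewrite Rmult_assoc. apply Rmult_le_compat_r; [|lra]. apply Rmult_le_pos; lra. }
  assert (Hc : forall x, cos (s * x - zeta) = p * sin (s * x)).
  { intros x. assert (H := Hf x). unfold f in H. lra. }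
  assert (Hsn : forall x, sin (s * x - zeta) = - p * cos (s * x)).
  { intros x. assert (H := Hc (x + PI / 2 / s)).
    replace (s * (x + PI / 2 / s)) with (s * x + PI / 2) in H by (field; lra).
    replace (s * x + PI / 2 - zeta) with ((s * x - zeta) + PI / 2) in H by ring.
    rewrite cos_plus, sin_plus, cos_PI2, sin_PI2 in H. lra. }
  split.
  - assert (H1 := Hc 0). assert (H2 := Hsn 0). assert (H3 := sin2_cos2 (s * 0 - zeta)). unfold Rsqr in H3.
    rewrite H1, H2, Rmult_0_r, sin_0, cos_0 in *. nra.
  - intros x; split; [apply Hc|apply Hsn].
Qed.
Ltac sidec := repeat split; try (intros ?; nra); try nra.

Lemma C_mult (f g : R -> R) (x : R) : continuous f x -> continuous g x -> continuous (fun t => f t * g t) x.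
Proof. intros. apply (continuous_mult f g x); auto. Qed.
Lemma C_plus (f g : R -> R) (x : R) : continuous f x -> continuous g x -> continuous (fun t => f t + g t) x.
Proof. intros. apply (continuous_plus f g x); auto. Qed.
Lemma C_minus (f g : R -> R) (x : R) : continuous f x -> continuous g x -> continuous (fun t => f t - g t) x.
Proof. intros. apply (continuous_minus f g x); auto. Qed.
Lemma C_of_derive (f : R -> R) (x l : R) : is_derive f x l -> continuous f x.
Proof. intros H. apply (ex_derive_continuous (V:=R_NormedModule)). exists l; exact H. Qed.
Lemma C_abs (f : R -> R) (x : R) : continuous f x -> continuous (fun t => Rabs (f t)) x.
Proof. intros H. apply continuous_Rabs_comp. exact H. Qed.

Lemma le_eps (a b : R) : (forall e, 0 < e -> a <= b + e) -> a <= b.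
Proof. intros H. destruct (Rle_dec a b); auto. assert (H1 := H ((a - b)/2) ltac:(lra)). lra. Qed.

Lemma exRI (f : R -> R) (a b : R) : a <= b -> (forall x, a <= x <= b -> continuous f x) -> ex_RInt f a b.
Proof. intros Hab H. apply (ex_RInt_continuous (V:=R_CompleteNormedModule)). intros z Hz. rewrite Rmin_left, Rmax_right in Hz by lra. auto. Qed.

Lemma int_decay (f : R -> R) (r r' M : R) : 0 < r -> r <= r' ->
  (forall x, r <= x <= r' -> continuous f x) ->
  (forall x, r <= x <= r' -> Rabs (f x) <= M / (x * x)) ->
  Rabs (RInt f r r') <= M / r.
Proof.
  intros Hr Hrr Hc Hb.
  assert (HM : 0 <= M). { assert (H := Hb r ltac:(lra)). assert (0 <= Rabs (f r)) by apply Rabs_pos.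
    assert (0 < r * r) by nra. apply Rmult_le_reg_r with (/ (r*r)). apply Rinv_0_lt_compat; lra. lra. }
  assert (Ex : ex_RInt f r r') by (apply exRI; auto).
  eapply Rle_trans. apply abs_RInt_le; auto.
  assert (Hg : is_RInt (fun x => M / (x * x)) r r' (minus (- M / r') (- M / r))).
  { apply (is_RInt_derive (fun x => - M / x)).
    - intros x Hx. rewrite Rmin_left, Rmax_right in Hx by lra. auto_derive; [sidec|field; sidec].
    - intros x Hx. rewrite Rmin_left, Rmax_right in Hx by lra. apply C_of_derive with (- 2 * M / (x*x*x)). auto_derive; [sidec|field; sidec]. }
  apply Rle_trans with (RInt (fun x => M / (x * x)) r r').
  - apply RInt_le; auto.
    + apply exRI; auto. intros x Hx. apply C_abs. auto.
    + eexists; exact Hg.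
    + intros x Hx. apply Hb. lra.
  - rewrite (is_RInt_unique _ _ _ _ Hg). unfold minus, plus, opp; simpl.
    assert (0 <= M / r') by (apply Rdiv_le_0_compat; lra). unfold Rdiv in *. lra.
Qed.

Lemma int_const (f : R -> R) (a b M : R) : a <= b ->
  (forall x, a <= x <= b -> continuous f x) ->
  (forall x, a <= x <= b -> Rabs (f x) <= M) ->
  Rabs (RInt f a b) <= (b - a) * M.
Proof. intros Hab Hc Hb. apply abs_RInt_le_const; auto. apply exRI; auto. Qed.

Lemma chasles (f : R -> R) (a b c : R) : (forall x, continuous f x) ->
  RInt f a b + RInt f b c = RInt f a c.
Proof. intros H. apply (RInt_Chasles (V:=R_CompleteNormedModule) f a b c); apply (ex_RInt_continuous (V:=R_CompleteNormedModule)); auto. Qed.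

Lemma ibp_bound (P D : R -> R) (r r' PB : R) : 0 < r -> r <= r' ->
  (forall x, is_derive P x (D x)) -> (forall x, continuous D x) ->
  (forall x, Rabs (P x) <= PB) ->
  Rabs (RInt (fun x => D x / x) r r') <= 3 * PB / r.
Proof.
  intros Hr Hrr HD HDc HP.
  assert (HPB : 0 <= PB) by (eapply Rle_trans; [apply Rabs_pos|apply (HP 0)]).
  assert (Hi : is_RInt (fun x => D x / x - P x / (x * x)) r r' (minus (P r' / r') (P r / r))).
  { apply (is_RInt_derive (fun x => P x / x)).
    - intros x Hx. rewrite Rmin_left, Rmax_right in Hx by lra.
      assert (Hi : is_derive (fun x => / x) x (- / (x*x))) by (auto_derive; [sidec|field; sidec]).
      eapply D_eq. apply (D_mult P (fun x => / x)). apply HD. exact Hi.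
      simpl. field. lra.
    - intros x Hx. rewrite Rmin_left, Rmax_right in Hx by lra. apply C_minus.
      + apply C_mult. auto. apply C_of_derive with (- / (x*x)). auto_derive; [sidec|field; sidec].
      + apply C_mult. apply C_of_derive with (D x). auto. apply C_of_derive with (- 2 / (x*x*x)). auto_derive; [sidec|field; sidec]. }
  assert (E1 : ex_RInt (fun x => P x / (x * x)) r r').
  { apply exRI; auto. intros x Hx. apply C_mult. apply C_of_derive with (D x). auto. apply C_of_derive with (- 2 / (x*x*x)). auto_derive; [sidec|field; sidec]. }
  assert (E2 : RInt (fun x => D x / x) r r' = (P r' / r' - P r / r) + RInt (fun x => P x / (x * x)) r r').
  { assert (Hu := is_RInt_unique _ _ _ _ Hi). change (minus (P r' / r') (P r / r)) with (P r' / r' - P r / r) in Hu.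
    assert (RInt (fun x => D x / x - P x / (x * x)) r r' = RInt (fun x => D x / x) r r' - RInt (fun x => P x / (x * x)) r r').
    { apply (RInt_minus (fun x => D x / x) (fun x => P x / (x * x))); auto.
      apply (ex_RInt_ext (fun x => (D x / x - P x / (x * x)) + P x / (x * x))).
      intros; simpl; ring. apply (ex_RInt_plus (V:=R_NormedModule)). eexists; exact Hi. auto. }
    simpl in H. lra. }
  rewrite E2.
  assert (B1 := int_decay (fun x => P x / (x * x)) r r' PB Hr Hrr).
  assert (B1' : Rabs (RInt (fun x : R => P x / (x * x)) r r') <= PB / r).
  { apply B1. intros x Hx. apply C_mult. apply C_of_derive with (D x). auto. apply C_of_derive with (- 2 / (x*x*x)). auto_derive; [sidec|field; sidec].
    intros x Hx. unfold Rdiv. rewrite Rabs_mult, (Rabs_right (/ (x*x))). apply Rmult_le_compat_r; auto.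
    left; apply Rinv_0_lt_compat; nra. apply Rle_ge; left; apply Rinv_0_lt_compat; nra. }
  assert (B2 : Rabs (P r' / r') <= PB / r).
  { unfold Rdiv. rewrite Rabs_mult, (Rabs_right (/ r')) by (apply Rle_ge; left; apply Rinv_0_lt_compat; lra).
    apply Rmult_le_compat; auto. apply Rabs_pos. left; apply Rinv_0_lt_compat; lra. apply Rinv_le_contravar; lra. }
  assert (B3 : Rabs (P r / r) <= PB / r).
  { unfold Rdiv. rewrite Rabs_mult, (Rabs_right (/ r)) by (apply Rle_ge; left; apply Rinv_0_lt_compat; lra).
    apply Rmult_le_compat_r; auto. left; apply Rinv_0_lt_compat; lra. }
  eapply Rle_trans. apply Rabs_triang. eapply Rle_trans. apply Rplus_le_compat_r. apply Rabs_triang_gen || (unfold Rminus; eapply Rle_trans; [apply Rabs_triang|]; rewrite Rabs_Ropp; apply Rle_refl).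
  unfold Rdiv in *. lra.
Qed.

Lemma tail2 (g phi Qt P : R -> R) (PB A : R) :
  (forall x, continuous g x) -> (forall x, continuous phi x) -> (forall x, continuous Qt x) ->
  (forall x, is_derive P x (phi x * Qt x)) -> (forall x, Rabs (P x) <= PB) -> (forall x, Rabs (phi x) <= 1) ->
  (forall x, 2 <= x -> Rabs (g x - Qt x / x) <= A / (x * x)) ->
  forall r r', 2 <= r <= r' -> Rabs (RInt (fun t => phi t * g t) r r') <= (3 * PB + A) / r.
Proof.
  intros Hg Hphi HQ HP HPB Hphi1 Hdec r r' Hr.
  assert (Cinv : forall x, 0 < x -> continuous (fun t => / t) x).
  { intros x Hx. apply C_of_derive with (- / (x*x)). auto_derive; [sidec|field; sidec]. }
  assert (C1 : forall x, r <= x <= r' -> continuous (fun t => phi t * Qt t / t) x).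
  { intros x Hx. apply C_mult. apply C_mult; auto. apply Cinv; lra. }
  assert (C2 : forall x, r <= x <= r' -> continuous (fun t => phi t * (g t - Qt t / t)) x).
  { intros x Hx. apply C_mult; auto. apply C_minus; auto. apply C_mult; auto. apply Cinv; lra. }
  assert (E : RInt (fun t => phi t * g t) r r' = RInt (fun t => phi t * Qt t / t) r r' + RInt (fun t => phi t * (g t - Qt t / t)) r r').
  { rewrite <- (RInt_plus (V:=R_CompleteNormedModule) (fun t => phi t * Qt t / t) (fun t => phi t * (g t - Qt t / t))).
    apply RInt_ext. intros x Hx. rewrite Rmin_left, Rmax_right in Hx by lra. change plus with Rplus; simpl. field. lra.
    apply exRI; [lra|auto]. apply exRI; [lra|auto]. }
  rewrite E.
  assert (B1 : Rabs (RInt (fun t => phi t * Qt t / t) r r') <= 3 * PB / r).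
  { apply (ibp_bound P (fun t => phi t * Qt t)); auto; try lra. intros x. apply C_mult; auto. }
  assert (B2 : Rabs (RInt (fun t => phi t * (g t - Qt t / t)) r r') <= A / r).
  { apply int_decay; auto; try lra.
    intros x Hx. rewrite Rabs_mult. replace (A / (x*x)) with (1 * (A / (x * x))) by ring.
    apply Rmult_le_compat; auto; try apply Rabs_pos. apply Hdec. lra. }
  eapply Rle_trans. apply Rabs_triang. unfold Rdiv in *. lra.
Qed.

Lemma tail_bound (g phi Qt P : R -> R) (PB A MG : R) :
  (forall x, continuous g x) -> (forall x, continuous phi x) -> (forall x, continuous Qt x) ->
  (forall x, is_derive P x (phi x * Qt x)) -> (forall x, Rabs (P x) <= PB) -> (forall x, Rabs (phi x) <= 1) ->
  (forall x, 0 <= x -> Rabs (g x) <= MG) ->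
  (forall x, 2 <= x -> Rabs (g x - Qt x / x) <= A / (x * x)) ->
  forall r r', 1 <= r <= r' -> Rabs (RInt (fun t => phi t * g t) r r') <= (3 * PB + A + 2 * MG) / r.
Proof.
  intros Hg Hphi HQ HP HPB Hphi1 HMG Hdec r r' Hr.
  assert (HPB0 : 0 <= PB) by (eapply Rle_trans; [apply Rabs_pos|apply (HPB 0)]).
  assert (HMG0 : 0 <= MG) by (eapply Rle_trans; [apply Rabs_pos|apply (HMG 0); lra]).
  assert (HA0 : 0 <= A).
  { assert (H := Hdec 2 ltac:(lra)). assert (H0 := Rabs_pos (g 2 - Qt 2 / 2)). lra. }
  assert (Cpg : forall x, continuous (fun t => phi t * g t) x) by (intros; apply C_mult; auto).
  assert (Bpg : forall a b, 0 <= a <= b -> Rabs (RInt (fun t => phi t * g t) a b) <= (b - a) * MG).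
  { intros a b Hab. apply int_const; try lra. auto. intros x Hx. rewrite Rabs_mult.
    replace MG with (1 * MG) by ring. apply Rmult_le_compat; auto; try apply Rabs_pos. apply HMG; lra. }
  assert (Hr0 : 0 < r) by lra.
  assert (Hinv : 1 <= 2 / r -> True) by auto.
  destruct (Rle_dec 2 r) as [H2|H2].
  - eapply Rle_trans. apply (tail2 g phi Qt P PB A); auto. lra.
    apply Rmult_le_compat_r. left; apply Rinv_0_lt_compat; lra. lra.
  - assert (H2r : 1 < 2 / r). { apply Rmult_lt_reg_r with r; [lra|]. unfold Rdiv. rewrite Rmult_assoc, Rinv_l by lra. lra. }
    assert (HMr : MG <= 2 * MG / r). { unfold Rdiv. rewrite Rmult_assoc. replace (2 * / r) with (2 / r) by reflexivity. nra. }
    destruct (Rle_dec r' 2) as [H3|H3].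
    + eapply Rle_trans. apply Bpg; lra.
      assert ((r' - r) * MG <= MG) by nra.
      assert (0 <= (3 * PB + A) / r) by (apply Rdiv_le_0_compat; lra).
      unfold Rdiv in *. lra.
    + assert (Ech : RInt (fun t : R => phi t * g t) r 2 + RInt (fun t : R => phi t * g t) 2 r' = RInt (fun t : R => phi t * g t) r r') by (apply chasles; intros; apply C_mult; auto). rewrite <- Ech.
      eapply Rle_trans. apply Rabs_triang.
      assert (B1 := Bpg r 2 ltac:(lra)).
      assert (B2 := tail2 g phi Qt P PB A Hg Hphi HQ HP HPB Hphi1 Hdec 2 r' ltac:(lra)).
      assert ((2 - r) * MG <= MG) by nra.
      assert ((3 * PB + A) / 2 <= (3 * PB + A) / r). { apply Rmult_le_compat_l. lra. apply Rinv_le_contravar; lra. }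
      unfold Rdiv in *. lra.
Qed.

Lemma lim_tail (Fn : R -> R) (K : R) :
  (forall r r', 1 <= r <= r' -> Rabs (Fn r' - Fn r) <= K / r) ->
  exists L, forall r, 1 <= r -> Rabs (Fn r - L) <= K / r.
Proof.
  intros H.
  assert (HK : 0 <= K). { assert (H1 := H 1 1 ltac:(lra)). assert (H0 := Rabs_pos (Fn 1 - Fn 1)). unfold Rdiv in H1. rewrite Rinv_1, Rmult_1_r in H1. lra. }
  set (u := fun n : nat => Fn (INR n + 1)).
  assert (Hc : Cauchy_crit u).
  { intros e He. destruct (nat_unbounded (K / e)) as [N HN].
    exists N. intros n m Hn Hm. unfold R_dist, u.
    assert (Hn' : INR N <= INR n) by (apply le_INR; lia). assert (Hm' : INR N <= INR m) by (apply le_INR; lia).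
    assert (HN0 := pos_INR N).
    assert (Hb : forall a b, INR N <= a -> a <= b -> Rabs (Fn (b + 1) - Fn (a + 1)) < e).
    { intros a b Ha Hab. eapply Rle_lt_trans. apply H. lra.
      apply Rle_lt_trans with (K / (INR N + 1)). apply Rmult_le_compat_l; auto. apply Rinv_le_contravar; lra.
      apply Rmult_lt_reg_r with (INR N + 1); [lra|]. unfold Rdiv. rewrite Rmult_assoc, Rinv_l by lra.
      apply Rmult_lt_reg_r with (/ e). apply Rinv_0_lt_compat; lra. rewrite Rmult_1_r. 
      replace (e * (INR N + 1) * / e) with (INR N + 1) by (field; lra). unfold Rdiv in HN. lra. }
    destruct (Rle_dec (INR n) (INR m)).
    + rewrite Rabs_minus_sym. apply Hb; lra.
    + apply Hb; lra. }
  destruct (Rcomplete.R_complete u Hc) as [L HL]. exists L. intros r Hr.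
  apply le_eps. intros e He.
  destruct (HL e He) as [N1 HN1].
  destruct (nat_unbounded r) as [N2 HN2].
  set (n := (N1 + N2)%nat).
  assert (H1 := HN1 n ltac:(unfold n; lia)). unfold R_dist, u in H1.
  assert (Hn : r <= INR n + 1). { unfold n. rewrite plus_INR. assert (0 <= INR N1) by apply pos_INR. lra. }
  assert (H2 := H r (INR n + 1) ltac:(lra)).
  replace (Fn r - L) with ((Fn r - Fn (INR n + 1)) + (Fn (INR n + 1) - L)) by ring.
  eapply Rle_trans. apply Rabs_triang. rewrite Rabs_minus_sym. lra.
Qed.

Lemma exp_le (a b : R) : a <= b -> exp a <= exp b.
Proof. intros [H|H]. left; apply exp_increasing; auto. subst; lra. Qed.

Lemma rpow_small (d a : R) : 0 < d <= 1 -> 0 < a < 1 -> d <= Rpower d a.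
Proof.
  intros Hd Ha. unfold Rpower. rewrite <- (exp_ln d) at 1 by lra. apply exp_le.
  assert (ln d <= ln 1) by (apply ln_le; lra). rewrite ln_1 in H. nra.
Qed.

Lemma rpow_big (d a : R) : 1 <= d -> 0 < a < 1 -> 1 <= Rpower d a.
Proof.
  intros Hd Ha. unfold Rpower. rewrite <- exp_0. apply exp_le.
  assert (ln 1 <= ln d) by (apply ln_le; lra). rewrite ln_1 in H. nra.
Qed.

Lemma lip_holder (f : R -> R) (L M a : R) : 0 < a < 1 ->
  (forall x y, 0 <= x -> 0 <= y -> Rabs (f x - f y) <= L * Rabs (x - y)) ->
  (forall x, 0 <= x -> Rabs (f x) <= M) ->
  C0alpha a f.
Proof.
  intros Ha HL HM.
  assert (HM0 : 0 <= M) by (eapply Rle_trans; [apply (Rabs_pos (f 0))|apply HM; lra]).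
  assert (HL0 : 0 <= L).
  { assert (H := HL 0 1 ltac:(lra) ltac:(lra)). replace (Rabs (0 - 1)) with 1 in H by (rewrite Rabs_minus_sym, Rabs_right; lra).
    assert (H0 := Rabs_pos (f 0 - f 1)). lra. }
  exists M, (2 * M + L). split; [exact HM|].
  intros x y Hx Hy Hxy. set (d := Rabs (x - y)).
  assert (Hd : 0 < d) by (apply Rabs_pos_lt; lra).
  destruct (Rle_dec d 1) as [H1|H1].
  - assert (H2 := rpow_small d a ltac:(lra) Ha).
    eapply Rle_trans. apply HL; auto. fold d. nra.
  - assert (H2 := rpow_big d a ltac:(lra) Ha).
    assert (H3 : Rabs (f x - f y) <= 2 * M).
    { unfold Rminus. eapply Rle_trans. apply Rabs_triang. rewrite Rabs_Ropp. assert (H4 := HM x Hx). assert (H5 := HM y Hy). lra. }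
    nra.
Qed.

Lemma mvt_bound (f df : R -> R) (a b M : R) : a <= b ->
  (forall x, a <= x <= b -> is_derive f x (df x)) ->
  (forall x, a <= x <= b -> Rabs (df x) <= M) ->
  Rabs (f b - f a) <= M * (b - a).
Proof.
  intros Hab HD HB.
  destruct (MVT_gen f a b df) as [c [Hc E]].
  - intros x Hx. rewrite Rmin_left, Rmax_right in Hx by lra. apply HD; lra.
  - intros x Hx. rewrite Rmin_left, Rmax_right in Hx by lra. apply cont_pt_of_derive with (df x). apply HD; lra.
  - rewrite Rmin_left, Rmax_right in Hc by lra. rewrite E, Rabs_mult, (Rabs_right (b - a)) by lra.
    apply Rmult_le_compat_r; [lra|]. apply HB; lra.
Qed.

Definition uA (s : R) (g : R -> R) (LA r : R) := RInt (fun t => cos (s * t) * g t) 0 r - LA.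
Definition uB (s : R) (g : R -> R) (r : R) := RInt (fun t => sin (s * t) * g t) 0 r.
Definition uu s g LA r := (sin (s * r) * uA s g LA r - cos (s * r) * uB s g r) / s.
Definition uu1 s g LA r := cos (s * r) * uA s g LA r + sin (s * r) * uB s g r.
Definition uu2 s g LA r := - s * sin (s * r) * uA s g LA r + s * cos (s * r) * uB s g r + g r.
Definition hh s g LA r := if Rle_dec r 0 then uu1 s g LA 0 else uu s g LA r / r.
Definition hh1 s g LA r := uu1 s g LA r / r - uu s g LA r / (r * r).
Definition hh2 s g LA r := uu2 s g LA r / r - 2 * uu1 s g LA r / (r * r) + 2 * uu s g LA r / (r * r * r).

Lemma D_RInt (f : R -> R) (r : R) : (forall x, continuous f x) -> is_derive (fun b => RInt f 0 b) r (f r).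
Proof.
  intros Hf. apply (is_derive_RInt (V:=R_CompleteNormedModule) f (fun b => RInt f 0 b) 0 r).
  apply filter_forall. intros b. apply (RInt_correct (V:=R_CompleteNormedModule)).
  apply (ex_RInt_continuous (V:=R_CompleteNormedModule)). auto. auto.
Qed.


Lemma uu_derivs (s : R) (g : R -> R) (LA : R) : 0 < s -> (forall x, continuous g x) ->
  forall r, is_derive (uu s g LA) r (uu1 s g LA r) /\ is_derive (uu1 s g LA) r (uu2 s g LA r)
   /\ uu2 s g LA r = - (s * s) * uu s g LA r + g r.
Proof.
  intros Hs Hg r.
  assert (Cc : forall x, continuous (fun t => cos (s * t) * g t) x).
  { intros x. apply C_mult; auto. apply C_of_derive with (- s * sin (s * x)). auto_derive; auto; ring. }
  assert (Cs : forall x, continuous (fun t => sin (s * t) * g t) x).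
  { intros x. apply C_mult; auto. apply C_of_derive with (s * cos (s * x)). auto_derive; auto; ring. }
  assert (DA : is_derive (uA s g LA) r (cos (s * r) * g r)).
  { unfold uA. eapply D_eq. apply D_minus. apply (D_RInt (fun t => cos (s * t) * g t)); auto. apply (is_derive_const (K:=R_AbsRing) (V:=R_NormedModule)). simpl. unfold zero; simpl. ring. }
  assert (DB : is_derive (uB s g) r (sin (s * r) * g r)).
  { unfold uB. apply (D_RInt (fun t => sin (s * t) * g t)); auto. }
  assert (Dsin : is_derive (fun t => sin (s * t)) r (s * cos (s * r))) by (auto_derive; auto; ring).
  assert (Dcos : is_derive (fun t => cos (s * t)) r (- s * sin (s * r))) by (auto_derive; auto; ring).
  split; [|split].
  - unfold uu. eapply D_eq. apply (D_mult _ (fun _ => / s)).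
    apply D_minus; apply D_mult; eauto. apply (is_derive_const (K:=R_AbsRing) (V:=R_NormedModule)).
    unfold uu1, zero; simpl. field. lra.
  - unfold uu1. eapply D_eq. apply D_plus; apply D_mult; eauto.
    unfold uu2. assert (SC := sin2_cos2 (s * r)). unfold Rsqr in SC.
    replace (g r) with (g r * (sin (s * r) * sin (s * r) + cos (s * r) * cos (s * r))) at 3 by (rewrite SC; ring). ring.
  - unfold uu2, uu. field. lra.
Qed.

Lemma hh_pos s g LA r : 0 < r -> hh s g LA r = uu s g LA r / r.
Proof. intros H. unfold hh. destruct (Rle_dec r 0); [lra|reflexivity]. Qed.

Lemma D_inv (r : R) : r <> 0 -> is_derive (fun t => / t) r (- / (r * r)).
Proof. intros H. auto_derive; auto. field; auto. Qed.

Lemma hh_ode (s : R) (g : R -> R) (LA : R) : 0 < s -> (forall x, continuous g x) ->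
  forall r, 0 < r -> is_derive (hh s g LA) r (hh1 s g LA r) /\ is_derive (hh1 s g LA) r (hh2 s g LA r)
   /\ hh2 s g LA r + 2 / r * hh1 s g LA r + (s * s) * hh s g LA r = g r / r.
Proof.
  intros Hs Hg r Hr.
  destruct (uu_derivs s g LA Hs Hg r) as [D1 [D2 E]].
  assert (Dinv := D_inv r ltac:(lra)).
  assert (Dinv2 : is_derive (fun t => / (t * t)) r (- 2 / (r * r * r))) by (auto_derive; [intro; nra|field; lra]).
  split; [|split].
  - apply (is_derive_ext_loc (fun t => uu s g LA t / t)).
    + apply (filter_imp (fun t => 0 < t)). intros t Ht. symmetry. apply hh_pos; auto. apply (open_gt 0 r Hr).
    + eapply D_eq. apply (D_mult (uu s g LA) (fun t => / t)); eauto. unfold hh1. simpl. field. lra.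
  - unfold hh1. eapply D_eq. apply D_minus.
    apply (D_mult (uu1 s g LA) (fun t => / t)); eauto.
    apply (D_mult (uu s g LA) (fun t => / (t * t))); eauto.
    unfold hh2. field. lra.
  - rewrite hh_pos by lra. unfold hh1, hh2. rewrite E. field. lra.
Qed.

Lemma hh_C0 (s : R) (g : R -> R) (LA KA KB MG a : R) : 0 < s -> 0 < a < 1 -> (forall x, continuous g x) ->
  (forall r, 0 <= r -> Rabs (uA s g LA r) <= KA) -> (forall r, 0 <= r -> Rabs (uB s g r) <= KB) ->
  (forall r, 0 <= r -> Rabs (g r) <= MG) ->
  C0alpha a (hh s g LA).
Proof.
  intros Hs Ha Hg HA HB HG.
  assert (KA0 : 0 <= KA) by (eapply Rle_trans; [apply (Rabs_pos (uA s g LA 0))|apply HA; lra]).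
  assert (KB0 : 0 <= KB) by (eapply Rle_trans; [apply (Rabs_pos (uB s g 0))|apply HB; lra]).
  assert (MG0 : 0 <= MG) by (eapply Rle_trans; [apply (Rabs_pos (g 0))|apply HG; lra]).
  set (U0 := (KA + KB) / s). set (U1 := KA + KB). set (U2 := s * (KA + KB) + MG).
  assert (HsC := fun x => Rabs_le (sin x)). 
  assert (Bs : forall x, Rabs (sin x) <= 1) by (intros; apply Rabs_le; apply SIN_bound).
  assert (Bc : forall x, Rabs (cos x) <= 1) by (intros; apply Rabs_le; apply COS_bound).
  assert (B0 : forall r, 0 <= r -> Rabs (uu s g LA r) <= U0).
  { intros r Hr. unfold uu, U0. unfold Rdiv. rewrite Rabs_mult, (Rabs_right (/ s)) by (apply Rle_ge; left; apply Rinv_0_lt_compat; lra).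
    apply Rmult_le_compat_r. left; apply Rinv_0_lt_compat; lra.
    unfold Rminus. eapply Rle_trans. apply Rabs_triang. rewrite Rabs_Ropp, !Rabs_mult.
    assert (H1 := HA r Hr). assert (H2 := HB r Hr). assert (H3 := Bs (s * r)). assert (H4 := Bc (s * r)).
    assert (H5 := Rabs_pos (sin (s*r))). assert (H6 := Rabs_pos (cos (s*r))).
    assert (H7 := Rabs_pos (uA s g LA r)). assert (H8 := Rabs_pos (uB s g r)). nra. }
  assert (B1 : forall r, 0 <= r -> Rabs (uu1 s g LA r) <= U1).
  { intros r Hr. unfold uu1, U1.
    eapply Rle_trans. apply Rabs_triang. rewrite !Rabs_mult.
    assert (H1 := HA r Hr). assert (H2 := HB r Hr). assert (H3 := Bs (s * r)). assert (H4 := Bc (s * r)).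
    assert (H5 := Rabs_pos (sin (s*r))). assert (H6 := Rabs_pos (cos (s*r))).
    assert (H7 := Rabs_pos (uA s g LA r)). assert (H8 := Rabs_pos (uB s g r)). nra. }
  assert (B2 : forall r, 0 <= r -> Rabs (uu2 s g LA r) <= U2).
  { intros r Hr. unfold uu2, U2.
    eapply Rle_trans. apply Rabs_triang. eapply Rle_trans. apply Rplus_le_compat_r. apply Rabs_triang. rewrite !Rabs_mult.
    rewrite Rabs_Ropp, (Rabs_right s) by lra.
    assert (H1 := HA r Hr). assert (H2 := HB r Hr). assert (H3 := Bs (s * r)). assert (H4 := Bc (s * r)).
    assert (H5 := Rabs_pos (sin (s*r))). assert (H6 := Rabs_pos (cos (s*r))).
    assert (H7 := Rabs_pos (uA s g LA r)). assert (H8 := Rabs_pos (uB s g r)). assert (H9 := HG r Hr). assert (X1 : Rabs (sin (s*r)) * Rabs (uA s g LA r) <= KA) by nra. assert (X2 : Rabs (cos (s*r)) * Rabs (uB s g r) <= KB) by nra. assert (s * (Rabs (sin (s*r)) * Rabs (uA s g LA r)) <= s * KA) by (apply Rmult_le_compat_l; lra). assert (s * (Rabs (cos (s*r)) * Rabs (uB s g r)) <= s * KB) by (apply Rmult_le_compat_l; lra). rewrite !Rmult_assoc. lra. }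
  assert (D := uu_derivs s g LA Hs Hg).
  assert (Lip1 : forall x y, 0 <= x <= y -> Rabs (uu1 s g LA y - uu1 s g LA x) <= U2 * (y - x)).
  { intros x y Hxy. apply (mvt_bound _ (uu2 s g LA)). lra. intros t Ht; apply D. intros t Ht. apply B2. lra. }
  assert (u0 : uu s g LA 0 = 0).
  { unfold uu, uB. rewrite Rmult_0_r, sin_0, cos_0, RInt_point. unfold zero; simpl. field. lra. }
  assert (H0val : hh s g LA 0 = uu1 s g LA 0) by (unfold hh; destruct (Rle_dec 0 0); [reflexivity|lra]).
  set (L := U2 + U1 + U0).
  assert (HB1 : forall r, 0 < r -> Rabs (hh1 s g LA r) <= L).
  { intros r Hr. destruct (Rle_dec r 1) as [Hr1|Hr1].
    - set (phi := fun t => t * uu1 s g LA r - uu s g LA t).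
      assert (Hphi := mvt_bound phi (fun t => uu1 s g LA r - uu1 s g LA t) 0 r (U2 * r) ltac:(lra)).
      assert (Hp : Rabs (phi r - phi 0) <= U2 * r * (r - 0)).
      { apply Hphi.
        - intros t Ht. unfold phi. eapply D_eq. apply D_minus. apply (D_mult (fun t => t) (fun _ => uu1 s g LA r)).
          apply D_id. apply (is_derive_const (K:=R_AbsRing) (V:=R_NormedModule)). apply D. unfold zero; simpl. ring.
        - intros t Ht. eapply Rle_trans. apply Lip1. lra. apply Rmult_le_compat_l. unfold U2; apply Rplus_le_le_0_compat; [apply Rmult_le_pos|]; lra. lra. }
      unfold phi in Hp. rewrite u0 in Hp.
      replace (r * uu1 s g LA r - uu s g LA r - (0 * uu1 s g LA r - 0)) with (hh1 s g LA r * (r * r)) in Hp by (unfold hh1; field; lra).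
      rewrite Rabs_mult, (Rabs_right (r*r)) in Hp by nra.
      assert (Rabs (hh1 s g LA r) <= U2). { apply Rmult_le_reg_r with (r * r). nra. nra. }
      unfold L. assert (0 <= U0) by (unfold U0; apply Rdiv_le_0_compat; lra). unfold U1. lra.
    - unfold hh1. unfold Rminus. eapply Rle_trans. apply Rabs_triang. rewrite Rabs_Ropp.
      unfold Rdiv. rewrite !Rabs_mult, (Rabs_right (/ r)), (Rabs_right (/ (r*r))).
      2,3: apply Rle_ge; left; apply Rinv_0_lt_compat; nra.
      assert (/ r <= 1) by (rewrite <- Rinv_1; apply Rinv_le_contravar; lra).
      assert (/ (r*r) <= 1) by (rewrite <- Rinv_1; apply Rinv_le_contravar; nra).
      assert (0 < / r) by (apply Rinv_0_lt_compat; lra). assert (0 < / (r*r)) by (apply Rinv_0_lt_compat; nra).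
      assert (Q1 := B1 r ltac:(lra)). assert (Q2 := B0 r ltac:(lra)).
      assert (Q5 := Rabs_pos (uu1 s g LA r)). assert (Q6 := Rabs_pos (uu s g LA r)).
      assert (0 <= U2) by (unfold U2; apply Rplus_le_le_0_compat; [apply Rmult_le_pos|]; lra).
      assert (Rabs (uu1 s g LA r) * / r <= U1 * 1) by (apply Rmult_le_compat; lra).
      assert (Rabs (uu s g LA r) * / (r * r) <= U0 * 1) by (apply Rmult_le_compat; lra).
      unfold L. lra. }
  apply (lip_holder _ L (U1 + U0)); auto.
  -
    assert (Hpos : forall x y, 0 < x <= y -> Rabs (hh s g LA x - hh s g LA y) <= L * Rabs (x - y)).
    { intros x y Hxy. rewrite Rabs_minus_sym, (Rabs_minus_sym x y), (Rabs_right (y - x)) by lra.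
      apply (mvt_bound _ (hh1 s g LA)). lra. intros t Ht. apply (hh_ode s g LA Hs Hg t). lra.
      intros t Ht. apply HB1. lra. }
    assert (H0 : forall y, 0 < y -> Rabs (hh s g LA 0 - hh s g LA y) <= L * Rabs (0 - y)).
    { intros y Hy. rewrite H0val, hh_pos by lra. rewrite Rabs_minus_sym, (Rabs_minus_sym 0 y), Rminus_0_r, (Rabs_right y) by lra.
      set (psi := fun t => uu s g LA t - t * uu1 s g LA 0).
      assert (Hp : Rabs (psi y - psi 0) <= U2 * y * (y - 0)).
      { apply (mvt_bound psi (fun t => uu1 s g LA t - uu1 s g LA 0)). lra.
        - intros t Ht. unfold psi. eapply D_eq. apply D_minus. apply D. apply (D_mult (fun t => t) (fun _ => uu1 s g LA 0)).
          apply D_id. apply (is_derive_const (K:=R_AbsRing) (V:=R_NormedModule)). unfold zero; simpl. ring.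
        - intros t Ht. eapply Rle_trans. apply Lip1. lra. apply Rmult_le_compat_l. unfold U2; apply Rplus_le_le_0_compat; [apply Rmult_le_pos|]; lra. lra. }
      unfold psi in Hp. rewrite u0 in Hp.
      replace (uu s g LA y - y * uu1 s g LA 0 - (0 - 0 * uu1 s g LA 0)) with ((uu s g LA y / y - uu1 s g LA 0) * y) in Hp by (field; lra).
      rewrite Rabs_mult, (Rabs_right y) in Hp by lra.
      assert (Rabs (uu s g LA y / y - uu1 s g LA 0) <= U2 * y). { apply Rmult_le_reg_r with y. lra. replace (U2 * y * y) with (U2 * y * (y - 0)) by ring. exact Hp. }
      assert (0 <= U0) by (unfold U0; apply Rdiv_le_0_compat; lra).
      assert (U2 * y <= L * y) by (apply Rmult_le_compat_r; unfold L, U1; lra). lra. }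
    intros x y Hx Hy.
    destruct (Rle_dec x y) as [Hxy|Hxy].
    + destruct (Req_dec x 0) as [E|E].
      * subst x. destruct (Req_dec y 0) as [E2|E2]. subst y. rewrite !Rminus_diag_eq, Rabs_R0, Rmult_0_r by reflexivity. lra.
        apply H0. lra.
      * apply Hpos. lra.
    + destruct (Req_dec y 0) as [E|E].
      * subst y. rewrite Rabs_minus_sym, (Rabs_minus_sym x 0). apply H0. lra.
      * rewrite Rabs_minus_sym, (Rabs_minus_sym x y). apply Hpos. lra.
  - intros x Hx. destruct (Req_dec x 0) as [E|E].
    + subst x. rewrite H0val. assert (H1 := B1 0 ltac:(lra)). assert (0 <= U0) by (unfold U0; apply Rdiv_le_0_compat; lra). lra.
    + rewrite hh_pos by lra. destruct (Rle_dec x 1) as [Hx1|Hx1].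
      * assert (Hm := mvt_bound (uu s g LA) (uu1 s g LA) 0 x U1 Hx (fun t Ht => proj1 (D t)) (fun t Ht => B1 t ltac:(lra))).
        rewrite u0, Rminus_0_r, Rminus_0_r in Hm.
        unfold Rdiv. rewrite Rabs_mult, (Rabs_right (/ x)) by (apply Rle_ge; left; apply Rinv_0_lt_compat; lra).
        apply Rle_trans with (U1 * x * / x). apply Rmult_le_compat_r; auto. left; apply Rinv_0_lt_compat; lra.
        assert (0 <= U0) by (unfold U0; apply Rdiv_le_0_compat; lra). replace (U1 * x * / x) with U1 by (field; lra). lra.
      * unfold Rdiv. rewrite Rabs_mult, (Rabs_right (/ x)) by (apply Rle_ge; left; apply Rinv_0_lt_compat; lra).
        assert (/ x <= 1) by (rewrite <- Rinv_1; apply Rinv_le_contravar; lra).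
        assert (0 < / x) by (apply Rinv_0_lt_compat; lra). assert (H2 := B0 x Hx). assert (H6 := Rabs_pos (uu s g LA x)).
        unfold U1. nra.
Qed.

Lemma holder_cont (H : R -> R) (a B : R) : 0 < a ->
  (forall x y, x <> y -> Rabs (H x - H y) <= B * Rpower (Rabs (x - y)) a) ->
  forall x, continuous H x.
Proof.
  intros Ha HH x. apply continuity_pt_filterlim.
  unfold continuity_pt, continue_in, limit1_in, limit_in. simpl. intros eps He.
  set (Bp := Rabs B + 1).
  assert (HBp : 0 < Bp) by (unfold Bp; assert (0 <= Rabs B) by apply Rabs_pos; lra).
  exists (Rpower (eps / Bp) (1 / a)). split. unfold Rpower; apply exp_pos.
  intros y [[_ Hxy] Hd]. unfold R_dist in *.
  assert (Hlt : Rpower (Rabs (y - x)) a < eps / Bp).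
  { replace (eps / Bp) with (Rpower (Rpower (eps / Bp) (1 / a)) a).
    apply Rlt_Rpower_l; auto. split; auto. apply Rabs_pos_lt. lra.
    rewrite Rpower_mult. replace (1 / a * a) with 1 by (field; lra). apply Rpower_1. apply Rdiv_lt_0_compat; lra. }
  assert (Hpos : 0 < Rpower (Rabs (y - x)) a) by (unfold Rpower; apply exp_pos).
  eapply Rle_lt_trans. apply HH. lra.
  apply Rle_lt_trans with (Bp * Rpower (Rabs (y - x)) a).
  - apply Rmult_le_compat_r; [lra|]. unfold Bp. assert (B <= Rabs B) by apply RRle_abs. lra.
  - apply Rmult_lt_reg_l with (/ Bp). apply Rinv_0_lt_compat; lra.
    rewrite <- Rmult_assoc, Rinv_l by lra. unfold Rdiv in Hlt. lra.
Qed.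

Lemma holder_abs_comp (F : R -> R) (a B : R) : 0 < a -> 0 <= B ->
  holder_semi_le a F B -> forall x y, x <> y -> Rabs (F (Rabs x) - F (Rabs y)) <= B * Rpower (Rabs (x - y)) a.
Proof.
  intros Ha HB HF x y Hxy.
  destruct (Req_dec (Rabs x) (Rabs y)) as [E|E].
  - rewrite E, Rminus_diag_eq, Rabs_R0 by reflexivity. apply Rmult_le_pos; auto. left; unfold Rpower; apply exp_pos.
  - eapply Rle_trans. apply HF; auto; apply Rabs_pos. apply Rmult_le_compat_l; auto.
    apply Rle_Rpower_l. lra. split. apply Rabs_pos_lt. lra. apply Rabs_triang_inv2.
Qed.

Lemma rho_cont (rho : R -> R) : smooth rho -> forall x, continuous rho x.
Proof. intros H x. apply (ex_derive_continuous (V:=R_NormedModule)). exact (H 1%nat x). Qed.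

Lemma W_cont (rho : R -> R) : smooth rho -> (forall r, r < 1 -> rho r = 0) ->
  forall x, continuous (fun t => rho t * / t) x.
Proof.
  intros Hs H0 x. destruct (Rlt_dec x 1) as [H|H].
  - apply (continuous_ext_loc (fun t => rho t * / t) (fun _ => 0)). apply (filter_imp (fun t => t < 1)).
    intros t Ht. rewrite H0 by auto. rewrite Rmult_0_l. reflexivity. apply (open_lt 1 x H).
    apply continuous_const.
  - apply C_mult. apply rho_cont; auto. apply C_of_derive with (- / (x * x)). auto_derive. intro; lra. field. lra.
Qed.

Lemma inv_cube_cont (x : R) : continuous (fun t => / (1 + Rabs t) ^ 3) x.
Proof.
  apply (continuous_comp Rabs (fun y => / (1 + y) ^ 3)). apply continuous_Rabs.
  assert (H := Rabs_pos x).
  apply C_of_derive with (- 3 * / (1 + Rabs x) ^ 4). auto_derive. intro. nra. field. lra.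
Qed.

Lemma frac_bound (x : R) : 0 <= x -> x * / (1 + x) ^ 3 <= 1.
Proof. intros Hx. assert (0 < (1 + x) ^ 3) by (apply pow_lt; lra).
  apply Rmult_le_reg_r with ((1 + x) ^ 3); auto. rewrite Rmult_assoc, Rinv_l by lra. nra. Qed.

Lemma frac_bound2 (x : R) : 0 < x -> x * / (1 + x) ^ 3 <= / (x * x).
Proof. intros Hx. assert (0 < (1 + x) ^ 3) by (apply pow_lt; lra).
  apply Rmult_le_reg_r with ((1 + x) ^ 3 * (x * x)). nra.
  replace (x * / (1 + x) ^ 3 * ((1 + x) ^ 3 * (x * x))) with (x * x * x) by (field; lra).
  replace (/ (x * x) * ((1 + x) ^ 3 * (x * x))) with ((1 + x) ^ 3) by (field; lra). nra. Qed.

Lemma Bsin x : Rabs (sin x) <= 1. Proof. apply Rabs_le; apply SIN_bound. Qed.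
Lemma Bcos x : Rabs (cos x) <= 1. Proof. apply Rabs_le; apply COS_bound. Qed.

Lemma Qt_bound (k1 k2 k3 a b : R) : Rabs a <= 1 -> Rabs b <= 1 ->
  Rabs (k1 * (a * a) + k2 * (b * b) - k3 * (b * a)) <= Rabs k1 + Rabs k2 + Rabs k3.
Proof.
  intros Ha Hb. unfold Rminus. eapply Rle_trans. apply Rabs_triang. eapply Rle_trans. apply Rplus_le_compat_r. apply Rabs_triang.
  rewrite Rabs_Ropp, !Rabs_mult.
  assert (H1 := Rabs_pos a). assert (H2 := Rabs_pos b). assert (H3 := Rabs_pos k1). assert (H4 := Rabs_pos k2). assert (H5 := Rabs_pos k3).
  assert (Rabs a * Rabs a <= 1) by nra. assert (Rabs b * Rabs b <= 1) by nra. assert (Rabs b * Rabs a <= 1) by nra.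
  assert (Rabs k1 * (Rabs a * Rabs a) <= Rabs k1) by nra. assert (Rabs k2 * (Rabs b * Rabs b) <= Rabs k2) by nra.
  assert (Rabs k3 * (Rabs b * Rabs a) <= Rabs k3) by nra. lra.
Qed.

Lemma lin3 (k1 k2 k3 u v w : R) : Rabs u <= 2 -> Rabs v <= 2 -> Rabs w <= 2 ->
  Rabs (k1 * u + k2 * v + k3 * w) <= 2 * (Rabs k1 + Rabs k2 + Rabs k3).
Proof.
  intros Hu Hv Hw. eapply Rle_trans. apply Rabs_triang. eapply Rle_trans. apply Rplus_le_compat_r. apply Rabs_triang.
  rewrite !Rabs_mult.
  assert (H3 := Rabs_pos k1). assert (H4 := Rabs_pos k2). assert (H5 := Rabs_pos k3).
  assert (Rabs k1 * Rabs u <= Rabs k1 * 2) by (apply Rmult_le_compat_l; lra).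
  assert (Rabs k2 * Rabs v <= Rabs k2 * 2) by (apply Rmult_le_compat_l; lra).
  assert (Rabs k3 * Rabs w <= Rabs k3 * 2) by (apply Rmult_le_compat_l; lra). lra.
Qed.

Lemma cube_bound (a : R) : Rabs a <= 1 -> Rabs (a ^ 3 / 3) <= 1 / 3 /\ Rabs (a ^ 3) <= 1.
Proof.
  intros Ha. assert (H : Rabs (a ^ 3) <= 1).
  { rewrite <- RPow_abs. assert (H0 := Rabs_pos a). simpl. nra. }
  split; auto. unfold Rdiv. rewrite Rabs_mult, (Rabs_right (/ 3)) by lra. lra.
Qed.

Lemma P_bound (k1 k2 k3 a b s : R) : 0 < s -> Rabs a <= 1 -> Rabs b <= 1 ->
  Rabs ((k1 * (a - a ^ 3 / 3) + k2 * (a ^ 3 / 3) + k3 * (b ^ 3 / 3)) / s) <= 2 * (Rabs k1 + Rabs k2 + Rabs k3) / s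
  /\ Rabs ((- k1 * (b ^ 3 / 3) + k2 * (- b + b ^ 3 / 3) - k3 * (a ^ 3 / 3)) / s) <= 2 * (Rabs k1 + Rabs k2 + Rabs k3) / s.
Proof.
  intros Hs Ha Hb.
  destruct (cube_bound a Ha) as [A1 A2]. destruct (cube_bound b Hb) as [B1 B2].
  assert (Ht : forall x y, Rabs (x - y) <= Rabs x + Rabs y).
  { intros x y. unfold Rminus. eapply Rle_trans. apply Rabs_triang. rewrite Rabs_Ropp. lra. }
  assert (Hp : forall x y, Rabs (x + y) <= Rabs x + Rabs y) by (intros; apply Rabs_triang).
  assert (Hn : forall x, Rabs (- x) = Rabs x) by (intros; apply Rabs_Ropp).
  assert (Hd : forall x M, Rabs x <= M -> Rabs (x / s) <= M / s).
  { intros x M H. unfold Rdiv. rewrite Rabs_mult, (Rabs_right (/ s)) by (apply Rle_ge; left; apply Rinv_0_lt_compat; lra).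
    apply Rmult_le_compat_r; auto. left; apply Rinv_0_lt_compat; lra. }
  split; apply Hd.
  - apply lin3. assert (H := Ht a (a ^ 3 / 3)). lra. lra. lra.
  - replace (- k1 * (b ^ 3 / 3) + k2 * (- b + b ^ 3 / 3) - k3 * (a ^ 3 / 3)) with (k1 * (- (b ^ 3 / 3)) + k2 * (- b + b ^ 3 / 3) + k3 * (- (a ^ 3 / 3))) by ring.
    apply lin3. rewrite Hn. lra. assert (H := Hp (- b) (b ^ 3 / 3)). rewrite Hn in H. lra. rewrite Hn. lra.
Qed.

Lemma cont_right_eq (f : R -> R) (x c : R) : continuity_pt f x -> (forall y, x < y -> f y = c) -> f x = c.
Proof.
  intros Hc Hy. destruct (Req_dec (f x) c) as [E|E]; auto. exfalso.
  unfold continuity_pt, continue_in, limit1_in, limit_in in Hc. simpl in Hc.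
  destruct (Hc (Rabs (f x - c))) as [d [Hd H]]. apply Rabs_pos_lt; lra.
  assert (H1 := H (x + d / 2)). unfold R_dist in H1. rewrite Hy in H1 by lra.
  assert (Rabs (c - f x) < Rabs (f x - c)).
  { apply H1. split. split. exact I. intro; lra. replace (x + d / 2 - x) with (d / 2) by ring. rewrite Rabs_right; lra. }
  rewrite Rabs_minus_sym in H0. lra.
Qed.

Theorem lemma5 (lam alpha zeta : R) (J N rho : R -> R)
  (Hlam : 0 < lam) (Halpha : 0 < alpha < 1)
  (HJ : solves_radial lam (fun _ => 0) J) (HJreg : bounded_near0 J)
  (HJas : bigO_inv_sq J (fun r => / r * cos (sqrt lam * r - zeta)))
  (HN : solves_radial lam (fun _ => 0) N) (HNsing : ~ bounded_near0 N)
  (HNas : bigO_inv_sq N (fun r => / r * sin (sqrt lam * r - zeta)))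
  (Hrho : smooth rho)
  (Hrho1 : forall r, 2 < r -> rho r = 1) (Hrho0 : forall r, r < 1 -> rho r = 0) :
  forall C : R, exists C' : R,
  forall (k1 k2 k3 : R) (etabar : R -> R),
    (exists A B,
        sup_le (fun r => etabar r * (1 + r) ^ 3) A /\
        holder_semi_le alpha (fun r => etabar r * (1 + r) ^ 3) B /\
        A + B + Rabs k1 + Rabs k2 + Rabs k3 < C) ->
    exists (h : R -> R) (c1 : R) (hbar : R -> R),
      C0alpha alpha h /\
      solves_radial lam (eta_fun lam zeta k1 k2 k3 rho etabar) h /\
      (forall r, 1 < r -> h r = c1 * / r * sin (sqrt lam * r - zeta) + hbar r) /\
      Rabs c1 <= C' /\
      (forall r, 1 < r -> Rabs (hbar r) <= C' * / ((1 + r) ^ 2)).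
Proof.
  intros C.
  destruct (J_trig lam zeta J Hlam HJ HJreg HJas) as [p [Hp Htrig]].
  set (s := sqrt lam) in *.
  assert (Hs : 0 < s) by (apply sqrt_lt_R0; auto).
  assert (Hss : s * s = lam) by (apply sqrt_sqrt; lra).
  destruct (continuity_ab_maj (fun x => Rabs (rho x)) 1 2 ltac:(lra)) as [Mx [HMx _]].
  { intros c Hc. apply continuity_pt_filterlim. apply C_abs. apply rho_cont; auto. }
  set (Mr := 1 + Rabs (rho Mx)).
  assert (HMr : forall x, Rabs (rho x) <= Mr).
  { intros x. assert (H0 := Rabs_pos (rho Mx)). unfold Mr.
    destruct (Rlt_dec x 1). rewrite Hrho0, Rabs_R0 by auto. lra.
    destruct (Rlt_dec 2 x). rewrite Hrho1, Rabs_R1 by auto. lra.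
    assert (H := HMx x ltac:(lra)). simpl in H. lra. }
  assert (HMr1 : 1 <= Mr) by (unfold Mr; assert (H0 := Rabs_pos (rho Mx)); lra).
  set (kap := 8 / s * (6 / s + 3 * Mr + 4)).
  exists (kap * C).
  intros k1 k2 k3 etabar [A [B [HA [HB HABC]]]].
  set (F := fun r => etabar r * (1 + r) ^ 3) in *.
  assert (A0 : 0 <= A) by (eapply Rle_trans; [apply (Rabs_pos (F 0))|apply HA; lra]).
  assert (B0 : 0 <= B).
  { assert (H := HB 0 1 ltac:(lra) ltac:(lra) ltac:(lra)).
    replace (Rabs (0 - 1)) with 1 in H by (rewrite Rabs_minus_sym, Rabs_right; lra).
    unfold Rpower in H; rewrite ln_1, Rmult_0_r, exp_0 in H. assert (H0 := Rabs_pos (F 0 - F 1)). lra. }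
  set (Sg := Rabs k1 + Rabs k2 + Rabs k3).
  assert (Sg0 : 0 <= Sg) by (unfold Sg; assert (H1 := Rabs_pos k1); assert (H2 := Rabs_pos k2); assert (H3 := Rabs_pos k3); lra).
  assert (HSC : Sg + A <= C) by (unfold Sg; lra).
  set (Qt := fun x => k1 * (cos (s * x) * cos (s * x)) + k2 * (sin (s * x) * sin (s * x)) - k3 * (sin (s * x) * cos (s * x))).
  set (g := fun x => rho x * / x * Qt x + x * F (Rabs x) * / (1 + Rabs x) ^ 3).
  set (Pc := fun x => (k1 * (sin (s * x) - sin (s * x) ^ 3 / 3) + k2 * (sin (s * x) ^ 3 / 3) + k3 * (cos (s * x) ^ 3 / 3)) / s).
  set (Ps := fun x => (- k1 * (cos (s * x) ^ 3 / 3) + k2 * (- cos (s * x) + cos (s * x) ^ 3 / 3) - k3 * (sin (s * x) ^ 3 / 3)) / s).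
  set (PB := 2 * Sg / s).
  set (MG := Mr * Sg + A).
  set (K := 3 * PB + A + 2 * MG).
  assert (Ccos : forall x, continuous (fun t => cos (s * t)) x).
  { intros x. apply C_of_derive with (- s * sin (s * x)). auto_derive; auto; ring. }
  assert (Csin : forall x, continuous (fun t => sin (s * t)) x).
  { intros x. apply C_of_derive with (s * cos (s * x)). auto_derive; auto; ring. }
  assert (CQ : forall x, continuous Qt x).
  { intros x. apply C_of_derive with (Derive Qt x). unfold Qt. apply Derive_correct. auto_derive. auto. }
  assert (Cg : forall x, continuous g x).
  { intros x. unfold g. apply (C_plus (fun x => rho x * / x * Qt x) (fun x => x * F (Rabs x) * / (1 + Rabs x) ^ 3)).
    - apply (C_mult (fun x => rho x * / x) Qt). apply W_cont; auto. auto.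
    - apply (C_mult (fun x => x * F (Rabs x)) (fun x => / (1 + Rabs x) ^ 3)).
      apply (C_mult (fun x => x) (fun x => F (Rabs x))). apply continuous_id.
      apply (holder_cont _ alpha B). lra. apply holder_abs_comp; auto. lra.
      apply inv_cube_cont. }
  assert (BQ : forall x, Rabs (Qt x) <= Sg) by (intros; apply Qt_bound; [apply Bcos|apply Bsin]).
  assert (Hrho2 : forall x, 2 <= x -> rho x = 1).
  { intros x Hx. destruct (Req_dec x 2) as [E|E]. subst x. apply cont_right_eq.
    apply continuity_pt_filterlim. apply rho_cont; auto. intros y Hy. apply Hrho1; auto. apply Hrho1; lra. }
  assert (HT2 : forall x, 0 <= x -> x * F (Rabs x) * / (1 + Rabs x) ^ 3 = F x * (x * / (1 + x) ^ 3)).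
  { intros x Hx. rewrite Rabs_right by lra. ring. }
  assert (HT2b : forall x, 0 <= x -> Rabs (F x * (x * / (1 + x) ^ 3)) <= A * (x * / (1 + x) ^ 3)).
  { intros x Hx. rewrite Rabs_mult, (Rabs_right (x * / (1 + x) ^ 3)).
    apply Rmult_le_compat_r. apply Rmult_le_pos; auto. left; apply Rinv_0_lt_compat, pow_lt; lra. apply HA; auto.
    apply Rle_ge, Rmult_le_pos; auto. left; apply Rinv_0_lt_compat, pow_lt; lra. }
  assert (HG : forall x, 0 <= x -> Rabs (g x) <= MG).
  { intros x Hx. unfold g. rewrite HT2 by auto. eapply Rle_trans. apply Rabs_triang.
    assert (T2 : Rabs (F x * (x * / (1 + x) ^ 3)) <= A).
    { eapply Rle_trans. apply HT2b; auto. assert (H := frac_bound x Hx). nra. }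
    assert (T1 : Rabs (rho x * / x * Qt x) <= Mr * Sg).
    { destruct (Rlt_dec x 1) as [H1|H1].
      - rewrite Hrho0 by auto. rewrite !Rmult_0_l, Rabs_R0. nra.
      - rewrite !Rabs_mult. rewrite (Rabs_right (/ x)) by (apply Rle_ge; left; apply Rinv_0_lt_compat; lra).
        assert (/ x <= 1) by (rewrite <- Rinv_1; apply Rinv_le_contravar; lra). assert (0 < / x) by (apply Rinv_0_lt_compat; lra).
        assert (Q1 := HMr x). assert (Q2 := BQ x). assert (Q3 := Rabs_pos (rho x)). assert (Q4 := Rabs_pos (Qt x)).
        assert (Rabs (rho x) * / x <= Mr * 1) by (apply Rmult_le_compat; lra).
        apply Rle_trans with (Mr * 1 * Sg). apply Rmult_le_compat; try lra. apply Rmult_le_pos; lra. lra. }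
    unfold MG. lra. }
  assert (HGdec : forall x, 2 <= x -> Rabs (g x - Qt x / x) <= A / (x * x)).
  { intros x Hx. unfold g. rewrite HT2 by lra. rewrite Hrho2 by auto.
    replace (1 * / x * Qt x + F x * (x * / (1 + x) ^ 3) - Qt x / x) with (F x * (x * / (1 + x) ^ 3)) by (field; lra).
    eapply Rle_trans. apply HT2b; lra. unfold Rdiv. apply Rmult_le_compat_l; auto. apply frac_bound2; lra. }
  assert (DPc : forall x, is_derive Pc x (cos (s * x) * Qt x)).
  { intros x. unfold Pc, Qt. auto_derive. auto. assert (SC := sin2_cos2 (s * x)). unfold Rsqr in SC.
    match goal with |- _ = ?R => transitivity (R + k1 * cos (s*x) * (1 - (sin (s*x) * sin (s*x) + cos (s*x) * cos (s*x)))) end;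
    [field; lra | rewrite SC; ring]. }
  assert (DPs : forall x, is_derive Ps x (sin (s * x) * Qt x)).
  { intros x. unfold Ps, Qt. auto_derive. auto. assert (SC := sin2_cos2 (s * x)). unfold Rsqr in SC.
    match goal with |- _ = ?R => transitivity (R + k2 * sin (s*x) * (1 - (sin (s*x) * sin (s*x) + cos (s*x) * cos (s*x)))) end;
    [field; lra | rewrite SC; ring]. }
  assert (BPc : forall x, Rabs (Pc x) <= PB).
  { intros x. destruct (P_bound k1 k2 k3 (sin (s * x)) (cos (s * x)) s Hs (Bsin _) (Bcos _)) as [H1 H2]. exact H1. }
  assert (BPs : forall x, Rabs (Ps x) <= PB).
  { intros x. destruct (P_bound k1 k2 k3 (sin (s * x)) (cos (s * x)) s Hs (Bsin _) (Bcos _)) as [H1 H2]. exact H2. }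
  assert (TBc := tail_bound g (fun t => cos (s * t)) Qt Pc PB A MG Cg Ccos CQ DPc BPc (fun x => Bcos _) HG HGdec).
  assert (TBs := tail_bound g (fun t => sin (s * t)) Qt Ps PB A MG Cg Csin CQ DPs BPs (fun x => Bsin _) HG HGdec).
  fold K in TBc, TBs.
  assert (Cgc : forall x, continuous (fun t => cos (s * t) * g t) x) by (intros; apply C_mult; auto).
  assert (Cgs : forall x, continuous (fun t => sin (s * t) * g t) x) by (intros; apply C_mult; auto).
  set (FA := fun r => RInt (fun t => cos (s * t) * g t) 0 r).
  set (FB := fun r => RInt (fun t => sin (s * t) * g t) 0 r).
  assert (ChA : forall a b, FA b - FA a = RInt (fun t => cos (s * t) * g t) a b).
  { intros a b. unfold FA. rewrite <- (chasles (fun t => cos (s * t) * g t) 0 a b) by auto. ring. }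
  assert (ChB : forall a b, FB b - FB a = RInt (fun t => sin (s * t) * g t) a b).
  { intros a b. unfold FB. rewrite <- (chasles (fun t => sin (s * t) * g t) 0 a b) by auto. ring. }
  destruct (lim_tail FA K) as [LA HLA]. { intros r r' Hr. rewrite ChA. apply TBc; auto. }
  destruct (lim_tail FB K) as [LB HLB]. { intros r r' Hr. rewrite ChB. apply TBs; auto. }
  assert (MG0 : 0 <= MG) by (unfold MG; nra).
  assert (K0 : 0 <= K) by (unfold K, PB; assert (0 <= 2 * Sg / s) by (apply Rdiv_le_0_compat; lra); lra).
  assert (Hin : forall (phi : R -> R) a b, (forall x, continuous phi x) -> (forall x, Rabs (phi x) <= 1) -> 0 <= a <= b ->
     Rabs (RInt (fun t => phi t * g t) a b) <= (b - a) * MG).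
  { intros phi a b Hc Hb Hab. apply int_const; try lra. intros; apply C_mult; auto.
    intros x Hx. rewrite Rabs_mult. replace MG with (1 * MG) by ring. apply Rmult_le_compat; auto; try apply Rabs_pos. apply HG; lra. }
  assert (BA : forall r, 0 <= r -> Rabs (FA r - LA) <= K + MG).
  { intros r Hr. destruct (Rle_dec 1 r) as [H1|H1].
    - eapply Rle_trans. apply HLA; auto. assert (K / r <= K). { unfold Rdiv. replace K with (K * 1) at 2 by ring. apply Rmult_le_compat_l; auto. rewrite <- Rinv_1. apply Rinv_le_contravar; lra. } lra.
    - replace (FA r - LA) with ((FA 1 - LA) - (FA 1 - FA r)) by ring.
      unfold Rminus at 1. eapply Rle_trans. apply Rabs_triang. rewrite Rabs_Ropp, ChA.
      assert (H2 := HLA 1 ltac:(lra)). unfold Rdiv in H2. rewrite Rinv_1, Rmult_1_r in H2.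
      assert (H3 := Hin (fun t => cos (s * t)) r 1 Ccos (fun x => Bcos _) ltac:(lra)).
      assert ((1 - r) * MG <= MG) by nra. lra. }
  assert (FB0 : FB 0 = 0) by (unfold FB; rewrite RInt_point; reflexivity).
  assert (BLB : Rabs LB <= K + MG).
  { assert (H := BA 0). clear H. 
    destruct (Rle_dec 1 1) as [_|]; [|lra].
    replace LB with (- ((FB 1 - LB) - (FB 1 - FB 0))) by (rewrite FB0; ring).
    rewrite Rabs_Ropp. unfold Rminus at 1. eapply Rle_trans. apply Rabs_triang. rewrite Rabs_Ropp, ChB.
    assert (H2 := HLB 1 ltac:(lra)). unfold Rdiv in H2. rewrite Rinv_1, Rmult_1_r in H2.
    assert (H3 := Hin (fun t => sin (s * t)) 0 1 Csin (fun x => Bsin _) ltac:(lra)). lra. }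
  assert (BB : forall r, 0 <= r -> Rabs (FB r - LB) <= K + MG).
  { intros r Hr. destruct (Rle_dec 1 r) as [H1|H1].
    - eapply Rle_trans. apply HLB; auto. assert (K / r <= K). { unfold Rdiv. replace K with (K * 1) at 2 by ring. apply Rmult_le_compat_l; auto. rewrite <- Rinv_1. apply Rinv_le_contravar; lra. } lra.
    - replace (FB r - LB) with ((FB 1 - LB) - (FB 1 - FB r)) by ring.
      unfold Rminus at 1. eapply Rle_trans. apply Rabs_triang. rewrite Rabs_Ropp, ChB.
      assert (H2 := HLB 1 ltac:(lra)). unfold Rdiv in H2. rewrite Rinv_1, Rmult_1_r in H2.
      assert (H3 := Hin (fun t => sin (s * t)) r 1 Csin (fun x => Bsin _) ltac:(lra)).
      assert ((1 - r) * MG <= MG) by nra. lra. }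
  assert (BuA : forall r, 0 <= r -> Rabs (uA s g LA r) <= K + MG) by (intros; apply BA; auto).
  assert (BuB : forall r, 0 <= r -> Rabs (uB s g r) <= 2 * (K + MG)).
  { intros r Hr. change (uB s g r) with (FB r). replace (FB r) with ((FB r - LB) + LB) by ring.
    eapply Rle_trans. apply Rabs_triang. assert (H := BB r Hr). lra. }
  assert (Hk0 : K + MG <= (6 / s + 3 * Mr + 4) * C).
  { unfold K, PB, MG. unfold Rdiv. assert (Hi : 0 < / s) by (apply Rinv_0_lt_compat; lra).
    assert (X1 : (6 * / s + 3 * Mr + 4) * (Sg + A) <= (6 * / s + 3 * Mr + 4) * C) by (apply Rmult_le_compat_l; nra).
    assert (X2 : 0 <= (6 * / s + 3 * Mr) * A) by nra.
    nra. }
  assert (Hpabs : Rabs p = 1).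
  { assert (H := Rabs_pos p). assert (Rabs p * Rabs p = 1) by (rewrite <- Rabs_mult, Hp; apply Rabs_R1). nra. }
  set (c1 := p * LB / s).
  exists (hh s g LA), c1, (fun r => hh s g LA r - c1 * / r * sin (s * r - zeta)).
  split; [|split; [|split; [|split]]].
  - apply (hh_C0 s g LA (K + MG) (2 * (K + MG)) MG alpha); auto.
  - exists (hh1 s g LA), (hh2 s g LA). intros r Hr.
    destruct (hh_ode s g LA Hs Cg r Hr) as [D1 [D2 E]]. split; [|split]; auto.
    rewrite Hss in E. rewrite E. destruct (Htrig r) as [Hc Hsn].
    unfold eta_fun. fold s. rewrite Hc, Hsn. unfold g, Qt, F. rewrite Rabs_right by lra.
    match goal with |- _ = ?R => transitivity (R + (1 - p * p) * (rho r * / (r * r) * (k1 * (cos (s * r) * cos (s * r)) + k2 * (sin (s * r) * sin (s * r)) - k3 * (sin (s * r) * cos (s * r))))) end.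
    + field. split; lra.
    + rewrite Hp. ring.
  - intros r Hr. ring.
  - unfold c1. unfold Rdiv. rewrite !Rabs_mult, Hpabs, (Rabs_right (/ s)) by (apply Rle_ge; left; apply Rinv_0_lt_compat; lra).
    assert (Hi : 0 < / s) by (apply Rinv_0_lt_compat; lra).
    unfold kap. unfold Rdiv. 
    assert (Rabs LB * / s <= (6 * / s + 3 * Mr + 4) * C * / s) by (apply Rmult_le_compat_r; lra).
    assert (0 <= (6 * / s + 3 * Mr + 4) * C * / s). { assert (0 <= K + MG) by lra. nra. }
    nra.
  - intros r Hr. rewrite hh_pos by lra. destruct (Htrig r) as [Hc Hsn]. fold s in Hsn. rewrite Hsn.
    unfold uu, c1.
    assert (HA1 := HLA r ltac:(lra)). assert (HB1 := HLB r ltac:(lra)).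
    change (uA s g LA r) with (FA r - LA). change (uB s g r) with (FB r).
    assert (Eq : (sin (s * r) * (FA r - LA) - cos (s * r) * FB r) / s / r - p * LB / s * / r * (- p * cos (s * r))
      = (sin (s * r) * (FA r - LA) - cos (s * r) * (FB r - LB)) * / (s * r)).
    { transitivity ((sin (s * r) * (FA r - LA) - cos (s * r) * (FB r - LB)) * / (s * r) + (p * p - 1) * LB * cos (s * r) / (s * r)).
      field; lra. rewrite Hp. field; lra. }
    rewrite Eq.
    rewrite Rabs_mult, (Rabs_right (/ (s * r))) by (apply Rle_ge; left; apply Rinv_0_lt_compat; nra).
    assert (N1 : Rabs (sin (s * r) * (FA r - LA) - cos (s * r) * (FB r - LB)) <= 2 * K / r).
    { unfold Rminus at 1. eapply Rle_trans. apply Rabs_triang. rewrite Rabs_Ropp, !Rabs_mult.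
      assert (Q1 := Bsin (s * r)). assert (Q2 := Bcos (s * r)). assert (Q3 := Rabs_pos (sin (s*r))). assert (Q4 := Rabs_pos (cos (s*r))).
      assert (Q5 := Rabs_pos (FA r - LA)). assert (Q6 := Rabs_pos (FB r - LB)).
      assert (Rabs (sin (s * r)) * Rabs (FA r - LA) <= 1 * (K / r)) by (apply Rmult_le_compat; lra).
      assert (Rabs (cos (s * r)) * Rabs (FB r - LB) <= 1 * (K / r)) by (apply Rmult_le_compat; lra).
      unfold Rdiv in *. lra. }
    assert (Hi : 0 < / (s * r)) by (apply Rinv_0_lt_compat; nra).
    eapply Rle_trans. apply Rmult_le_compat_r. lra. exact N1.
    assert (Hsq : 0 < (1 + r) ^ 2) by (apply pow_lt; lra).
    assert (Hi2 : 0 < / (1 + r) ^ 2) by (apply Rinv_0_lt_compat; lra).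
    assert (E1 : 2 * K / r * / (s * r) = (2 * K / s) * / (r * r)) by (field; lra).
    rewrite E1.
    assert (E2 : / (r * r) <= 4 * / (1 + r) ^ 2).
    { apply Rmult_le_reg_r with ((1 + r) ^ 2 * (r * r)). nra.
      replace (/ (r * r) * ((1 + r) ^ 2 * (r * r))) with ((1 + r) ^ 2) by (field; lra).
      replace (4 * / (1 + r) ^ 2 * ((1 + r) ^ 2 * (r * r))) with (4 * (r * r)) by (field; lra). nra. }
    assert (Hi3 : 0 < / s) by (apply Rinv_0_lt_compat; lra).
    assert (E3 : 2 * K / s * 4 <= kap * C).
    { unfold kap. unfold Rdiv. assert (K <= (6 * / s + 3 * Mr + 4) * C) by lra. nra. }
    assert (0 <= 2 * K / s) by (unfold Rdiv; nra).
    apply Rle_trans with (2 * K / s * (4 * / (1 + r) ^ 2)). apply Rmult_le_compat_l; auto.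
    rewrite <- Rmult_assoc. apply Rmult_le_compat_r; lra.
Qed.
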